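(* Let $\varphi$ be any forecasting system (not necessarily computable or non-degenerate) and $\omega\in\Omega$. If $\omega$ is Schnorr test random for $\varphi$, then $\omega$ is Schnorr random for $\varphi$.
   Context: Notation: $\mathbb N_0=\{0,1,\dots\}$; $\Omega=\{0,1\}^{\mathbb N}$; $\mathbb S$ finite binary strings, $\square$ empty string, $|s|$ length, $\omega^n$ first $n$ entries of $\omega$; $[s]=\{\omega:\omega^{|s|}=s\}$, $[A]=\bigcup_{s\in A}[s]$; for $A\subseteq\mathbb N_0\times\mathbb S$, $A_n=\{s:(n,s)\in A\}$, $A_n^{<\ell}=\{s\in A_n:|s|<\ell\}$. $\mathcal I$: nonempty closed subintervals of $[0,1]$; $\overline E_I(f)=\max_{p\in I}[pf(1)+(1-p)f(0)]$. Forecasting system: any $\varphi:\mathbb S\to\mathcal I$. Supermartingale for $\varphi$: $M:\mathbb S\to\mathbb R$ with $\overline E_{\varphi(s)}(M(s\,\cdot))\le M(s)$ for all $s$; test supermartingale: non-negative with $M(\square)=1$. $\overline P_\varphi(G)=\inf\{M(\square):M\text{ supermartingale for }\varphi,\ \liminf_nM(\omega^n)\ge\mathbb 1_G(\omega)\ \forall\omega\}$. A real map $r:\mathbb S\to\mathbb R$ is computable if there is a recursive $q:\mathbb S\times\mathbb N_0\to\mathbb Q$ with $|r(s)-q(s,N)|\le2^{-N}$. A growth function is a recursive, non-decreasing, unbounded $\rho:\mathbb N_0\to\mathbb N_0$. $\omega$ is Schnorr random for $\varphi$ if $\limsup_n[T(\omega^n)-\rho(n)]\le0$ for all computable test supermartingales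 $T$ for $\varphi$ and all growth functions $\rho$. A Schnorr test for $\varphi$ is a recursive $A\subseteq\mathbb N_0\times\mathbb S$ with $\overline P_\varphi([A_n])\le2^{-n}$ for all $n$ and a recursive $e:\mathbb N_0^2\to\mathbb N_0$ with $\overline P_\varphi([A_n]\setminus[A_n^{<\ell}])\le2^{-N}$ for all $(N,n)$ and all $\ell\ge e(N,n)$. $\omega$ is Schnorr test random if $\omega\notin\bigcap_n[A_n]$ for all Schnorr tests $A$ for $\varphi$. *)

(* Defs.v *)
From Stdlib Require Import Reals List Arith ZArith QArith Qreals.
From Coquelicot Require Import Coquelicot.
Import ListNotations.
Open Scope R_scope.

Inductive rcode : Type :=
| RZero : rcode
| RSucc : rcode
| RProj : nat -> rcode
| RComp : rcode -> list rcode -> rcode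
| RPrimRec : rcode -> rcode -> rcode
| RMu : rcode -> rcode.

Inductive reval : rcode -> list nat -> nat -> Prop :=
| ev_zero : forall v, reval RZero v 0
| ev_succ : forall x v, reval RSucc (x :: v) (S x)
| ev_proj : forall i v, (i < length v)%nat -> reval (RProj i) v (nth i v 0%nat)
| ev_comp : forall f gs v ys y,
    reval_list gs v ys -> reval f ys y -> reval (RComp f gs) v y
| ev_prec0 : forall f g v y, reval f v y -> reval (RPrimRec f g) (0%nat :: v) y
| ev_precS : forall f g n v y z,
    reval (RPrimRec f g) (n :: v) y -> reval g (n :: y :: v) z ->
    reval (RPrimRec f g) (S n :: v) z
| ev_mu : forall f v y,
    reval f (y :: v) 0 ->
    (forall k, (k < y)%nat -> exists m, reval f (k :: v) (S m)) ->
    reval (RMu f) v y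
with reval_list : list rcode -> list nat -> list nat -> Prop :=
| evl_nil : forall v, reval_list [] v []
| evl_cons : forall g gs v y ys,
    reval g v y -> reval_list gs v ys -> reval_list (g :: gs) v (y :: ys).

Definition recursive (f : nat -> nat) : Prop :=
  exists c : rcode, forall n, reval c [n] (f n).

Definition npair (a b : nat) : nat := ((a + b) * (a + b + 1)) / 2 + b.

(* Binary strings: bijection list bool -> nat. *)
Fixpoint senc (s : list bool) : nat :=
  match s with
  | [] => 0
  | b :: t => 2 * senc t + (if b then 2 else 1)
  end.

(* Integers and positives, hence (syntactic) rationals: bijections into nat. *)
Definition zenc (z : Z) : nat :=
  match z with
  | Z0 => 0
  | Zpos p => 2 * Pos.to_nat p
  | Zneg p => 2 * Pos.to_nat p - 1
  end.
Definition qenc (q : Q) : nat := npair (zenc (Qnum q)) (Pos.to_nat (Qden q) - 1).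

Definition recursive_set_NS (A : nat -> list bool -> bool) : Prop :=
  exists F, recursive F /\
    forall n s, F (npair n (senc s)) = (if A n s then 1%nat else 0%nat).

Definition recursive_NN (e : nat -> nat -> nat) : Prop :=
  exists F, recursive F /\ forall a b, F (npair a b) = e a b.

Definition recursive_SNQ (q : list bool -> nat -> Q) : Prop :=
  exists F, recursive F /\ forall s N, F (npair (senc s) N) = qenc (q s N).

Definition computable_real_map (r : list bool -> R) : Prop :=
  exists q : list bool -> nat -> Q, recursive_SNQ q /\
    forall s N, Rabs (r s - Q2R (q s N)) <= / 2 ^ N.

Definition growth_function (rho : nat -> nat) : Prop :=
  recursive rho /\ (forall m n, (m <= n)%nat -> (rho m <= rho n)%nat) /\
  (forall B, exists n, (B <= rho n)%nat).

Definition Omega := nat -> bool.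

Definition prefix (w : Omega) (n : nat) : list bool := map w (seq 0 n).

Definition cyl (B : list bool -> Prop) (w : Omega) : Prop :=
  exists s, B s /\ prefix w (length s) = s.

Record interval := mkI {
  ilo : R; ihi : R;
  ilo_ge0 : 0 <= ilo; ilo_le_ihi : ilo <= ihi; ihi_le1 : ihi <= 1 }.

Definition forecasting_system := list bool -> interval.

(* Upper expectation bar E_I(f) <= c, i.e. max_{p in I} [p f(1) + (1-p) f(0)] <= c. *)
Definition upper_exp_le (I : interval) (f : bool -> R) (c : R) : Prop :=
  forall p, ilo I <= p <= ihi I -> p * f true + (1 - p) * f false <= c.

Definition supermartingale (phi : forecasting_system) (M : list bool -> R) : Prop :=
  forall s, upper_exp_le (phi s) (fun x => M (s ++ [x])) (M s).

Definition test_supermartingale (phi : forecasting_system) (M : list bool -> R) : Prop :=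
  supermartingale phi M /\ (forall s, 0 <= M s) /\ M [] = 1.

Definition upper_prob_set (phi : forecasting_system) (G : Omega -> Prop) (v : R) : Prop :=
  exists M, supermartingale phi M /\
    (forall w, Rbar_le (Finite 0) (LimInf_seq (fun n => M (prefix w n))) /\
               (G w -> Rbar_le (Finite 1) (LimInf_seq (fun n => M (prefix w n))))) /\
    v = M [].

Definition upper_prob (phi : forecasting_system) (G : Omega -> Prop) : Rbar :=
  Glb_Rbar (upper_prob_set phi G).

Definition schnorr_random (phi : forecasting_system) (w : Omega) : Prop :=
  forall T rho, test_supermartingale phi T -> computable_real_map T ->
    growth_function rho ->
    Rbar_le (LimSup_seq (fun n => T (prefix w n) - INR (rho n))) (Finite 0).

Definition sec (A : nat -> list bool -> bool) (n : nat) : list bool -> Prop :=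
  fun s => A n s = true.
Definition sec_lt (A : nat -> list bool -> bool) (n l : nat) : list bool -> Prop :=
  fun s => A n s = true /\ (length s < l)%nat.

Definition schnorr_test (phi : forecasting_system)
    (A : nat -> list bool -> bool) (e : nat -> nat -> nat) : Prop :=
  recursive_set_NS A /\ recursive_NN e /\
  (forall n, Rbar_le (upper_prob phi (cyl (sec A n))) (Finite (/ 2 ^ n))) /\
  (forall N n l, (e N n <= l)%nat ->
     Rbar_le (upper_prob phi (fun w => cyl (sec A n) w /\ ~ cyl (sec_lt A n l) w))
             (Finite (/ 2 ^ N))).

Definition schnorr_test_random (phi : forecasting_system) (w : Omega) : Prop :=
  forall A e, schnorr_test phi A e -> ~ (forall n, cyl (sec A n) w).

(* Main.v *)
Require Import Defs.
From Coquelicot Require Import Coquelicot.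
From Stdlib Require Import Reals List Arith Lia ZArith QArith Qreals Lra.
From Stdlib Require Import ClassicalEpsilon Classical.
Import ListNotations.
Open Scope nat_scope.

Definition prim (k : nat) (f : list nat -> nat) : Prop :=
  exists c, forall v, length v = k -> reval c v (f v).

Lemma prim_ext k f g : (forall v, length v = k -> f v = g v) -> prim k f -> prim k g.
Proof. intros E [c Hc]; exists c; intros v Hv; rewrite <- E by auto; auto. Qed.

Lemma prim_zero k : prim k (fun _ => 0).
Proof. exists RZero; intros; constructor. Qed.

Lemma prim_proj k i : i < k -> prim k (fun v => nth i v 0).
Proof. intros H; exists (RProj i); intros v Hv; constructor; lia. Qed.

Lemma prim_comp k g fs : prim (length fs) g -> Forall (prim k) fs ->
  prim k (fun v => g (map (fun f => f v) fs)).
Proof.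
  intros [cg Hg] HF.
  assert (exists cs, forall v, length v = k -> reval_list cs v (map (fun f => f v) fs)) as [cs Hcs].
  { clear Hg. induction HF as [|f fs Hf _ IH].
    - exists []; intros; constructor.
    - destruct Hf as [c Hc]; destruct IH as [cs0 IH0].
      exists (c :: cs0); intros v Hv; simpl; constructor; auto. }
  exists (RComp cg cs); intros v Hv; econstructor; [apply Hcs; auto|].
  apply Hg; now rewrite length_map.
Qed.

Lemma prim_succ k f : prim k f -> prim k (fun v => S (f v)).
Proof.
  intros Hf. apply (prim_comp k (fun v => S (nth 0 v 0)) [f]); [|constructor; auto].
  exists RSucc; intros v Hv; destruct v as [|x [|]]; simpl in *; try lia; constructor.
Qed.

Lemma prim_const k c : prim k (fun _ => c).
Proof. induction c; [apply prim_zero|apply prim_succ; auto]. Qed.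

Lemma prim_comp1 k g f1 : prim 1 g -> prim k f1 -> prim k (fun v => g [f1 v]).
Proof. intros Hg H1. apply (prim_comp k g [f1]); repeat constructor; auto. Qed.
Lemma prim_comp2 k g f1 f2 : prim 2 g -> prim k f1 -> prim k f2 ->
  prim k (fun v => g [f1 v; f2 v]).
Proof. intros Hg H1 H2. apply (prim_comp k g [f1; f2]); repeat constructor; auto. Qed.

Definition hrec (f : list nat -> nat) (g : list nat -> nat) (v : list nat) : nat :=
  match v with
  | [] => 0
  | n :: w => nat_rec (fun _ => nat) (f w) (fun i acc => g (i :: acc :: w)) n
  end.

Lemma prim_rec k f g : prim k f -> prim (S (S k)) g -> prim (S k) (hrec f g).
Proof.
  intros [cf Hf] [cg Hg]. exists (RPrimRec cf cg).
  intros [|n w] Hv; simpl in Hv; [lia|]. injection Hv as Hv.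
  induction n; simpl.
  - constructor; auto.
  - econstructor; [exact IHn|]. apply Hg; simpl; lia.
Qed.

Lemma least_ex (g : nat -> nat) : (exists y, g y = 0) ->
  exists y, g y = 0 /\ forall k, k < y -> g k <> 0.
Proof.
  intros [n Hn]. revert Hn. induction n as [n IH] using lt_wf_ind. intros Hn.
  destruct (classic (exists k, k < n /\ g k = 0)) as [[k [Hk1 Hk2]]|Hno].
  - exact (IH k Hk1 Hk2).
  - exists n; split; auto. intros k Hk E; apply Hno; eauto.
Qed.

Definition minz (g : nat -> nat) : nat :=
  match excluded_middle_informative (exists y, g y = 0) with
  | left H => proj1_sig (constructive_indefinite_description _ (least_ex g H))
  | right _ => 0
  end.

Lemma minz_spec g : (exists y, g y = 0) ->
  g (minz g) = 0 /\ forall k, k < minz g -> g k <> 0.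
Proof.
  intros H. unfold minz. destruct excluded_middle_informative as [H'|H']; [|tauto].
  destruct constructive_indefinite_description; simpl; auto.
Qed.

Lemma minz_unique g y : g y = 0 -> (forall k, k < y -> g k <> 0) -> minz g = y.
Proof.
  intros H1 H2. destruct (minz_spec g) as [A B]; [eauto|].
  destruct (lt_eq_lt_dec (minz g) y) as [[l|e]|l]; auto.
  - exfalso; exact (H2 _ l A).
  - exfalso; exact (B _ l H1).
Qed.

Lemma prim_mu k f : prim (S k) f -> (forall v, exists y, f (y :: v) = 0) ->
  prim k (fun v => minz (fun y => f (y :: v))).
Proof.
  intros [c Hc] Hex. exists (RMu c). intros v Hv.
  destruct (minz_spec (fun y => f (y :: v)) (Hex v)) as [A B].
  constructor.
  - assert (E := Hc (minz (fun y => f (y :: v)) :: v) ltac:(simpl; lia)). simpl in A. rewrite A in E. exact E.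
  - intros j Hj. specialize (B j Hj). destruct (f (j :: v)) as [|m] eqn:E; [contradiction|].
    exists m; rewrite <- E; apply Hc; simpl; lia.
Qed.

Lemma prim_add k f g : prim k f -> prim k g -> prim k (fun v => f v + g v).
Proof.
  intros Hf Hg.
  assert (prim 2 (fun v => nth 0 v 0 + nth 1 v 0)) as Ha.
  { apply prim_ext with (f := hrec (fun w => nth 0 w 0) (fun w => S (nth 1 w 0))).
    - intros [|n [|x [|]]] Hv; simpl in Hv; try lia. simpl. induction n; simpl; lia.
    - apply prim_rec; [apply prim_proj; lia|apply prim_succ, prim_proj; lia]. }
  exact (prim_comp2 _ _ _ _ Ha Hf Hg).
Qed.

Lemma prim_mul k f g : prim k f -> prim k g -> prim k (fun v => f v * g v).
Proof.
  intros Hf Hg.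
  assert (prim 2 (fun v => nth 0 v 0 * nth 1 v 0)) as Ha.
  { apply prim_ext with (f := hrec (fun w => 0) (fun w => nth 1 w 0 + nth 2 w 0)).
    - intros [|n [|x [|]]] Hv; simpl in Hv; try lia. simpl. induction n; simpl; lia.
    - apply prim_rec; [apply prim_zero|apply prim_add; apply prim_proj; lia]. }
  exact (prim_comp2 _ _ _ _ Ha Hf Hg).
Qed.

Lemma prim_pred k f : prim k f -> prim k (fun v => pred (f v)).
Proof.
  intros Hf.
  assert (prim 1 (fun v => pred (nth 0 v 0))) as Ha.
  { apply prim_ext with (f := hrec (fun w => 0) (fun w => nth 0 w 0)).
    - intros [|n [|]] Hv; simpl in Hv; try lia. simpl. destruct n; simpl; lia.
    - apply prim_rec; [apply prim_zero|apply prim_proj; lia]. }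
  exact (prim_comp1 _ _ _ Ha Hf).
Qed.

Lemma prim_sub k f g : prim k f -> prim k g -> prim k (fun v => f v - g v).
Proof.
  intros Hf Hg.
  assert (prim 2 (fun v => nth 1 v 0 - nth 0 v 0)) as Ha.
  { apply prim_ext with (f := hrec (fun w => nth 0 w 0) (fun w => pred (nth 1 w 0))).
    - intros [|n [|x [|]]] Hv; simpl in Hv; try lia. simpl. induction n; simpl; lia.
    - apply prim_rec; [apply prim_proj; lia|apply prim_pred, prim_proj; lia]. }
  exact (prim_comp2 _ _ _ _ Ha Hg Hf).
Qed.

Lemma prim_pow2 k f : prim k f -> prim k (fun v => 2 ^ f v).
Proof.
  intros Hf.
  assert (prim 1 (fun v => 2 ^ nth 0 v 0)) as Ha.
  { apply prim_ext with (f := hrec (fun w => 1) (fun w => nth 1 w 0 + nth 1 w 0)).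
    - intros [|n [|]] Hv; simpl in Hv; try lia. simpl. induction n; simpl; lia.
    - apply prim_rec; [apply prim_const|apply prim_add; apply prim_proj; lia]. }
  exact (prim_comp1 _ _ _ Ha Hf).
Qed.

Fixpoint tri (n : nat) : nat := match n with 0 => 0 | S i => tri i + S i end.

Lemma prim_tri k f : prim k f -> prim k (fun v => tri (f v)).
Proof.
  intros Hf.
  assert (prim 1 (fun v => tri (nth 0 v 0))) as Ha.
  { apply prim_ext with (f := hrec (fun w => 0) (fun w => nth 1 w 0 + S (nth 0 w 0))).
    - intros [|n [|]] Hv; simpl in Hv; try lia. simpl. induction n; simpl; lia.
    - apply prim_rec; [apply prim_zero|apply prim_add; [|apply prim_succ]; apply prim_proj; lia]. }
  exact (prim_comp1 _ _ _ Ha Hf).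
Qed.

Fixpoint evenb (n : nat) : nat := match n with 0 => 1 | S i => 1 - evenb i end.

Lemma prim_even k f : prim k f -> prim k (fun v => evenb (f v)).
Proof.
  intros Hf.
  assert (prim 1 (fun v => evenb (nth 0 v 0))) as Ha.
  { apply prim_ext with (f := hrec (fun w => 1) (fun w => 1 - nth 1 w 0)).
    - intros [|n [|]] Hv; simpl in Hv; try lia. simpl. induction n; simpl in *; [reflexivity|]. rewrite IHn. simpl. lia.
    - apply prim_rec; [apply prim_const|apply prim_sub; [apply prim_const|apply prim_proj; lia]]. }
  exact (prim_comp1 _ _ _ Ha Hf).
Qed.

Lemma prim_of_rec k h f : recursive h -> prim k f -> prim k (fun v => h (f v)).
Proof.
  intros [c Hc] Hf. apply (prim_comp1 k (fun v => h (nth 0 v 0))); auto.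
  exists c; intros [|x [|]] Hv; simpl in Hv; try lia; apply Hc.
Qed.

Lemma recursive_of_prim h : prim 1 (fun v => h (nth 0 v 0)) -> recursive h.
Proof. intros [c Hc]; exists c; intros n; exact (Hc [n] eq_refl). Qed.

Lemma tri_double n : 2 * tri n = n * (n + 1).
Proof. induction n; simpl; lia. Qed.

Lemma npair_tri a b : npair a b = tri (a + b) + b.
Proof.
  unfold npair. f_equal. rewrite <- tri_double.
  rewrite Nat.mul_comm. apply Nat.div_mul. lia.
Qed.

Lemma tri_mono a b : a <= b -> tri a <= tri b.
Proof. induction 1; simpl; lia. Qed.

Lemma tri_ge n : n <= tri n.
Proof. induction n; simpl; lia. Qed.

Definition zfun (m : nat) : nat := minz (fun y => S m - tri (S y)).
Definition unp2 (m : nat) : nat := m - tri (zfun m).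
Definition unp1 (m : nat) : nat := zfun m - unp2 m.

Lemma zfun_npair a b : zfun (npair a b) = a + b.
Proof.
  rewrite npair_tri. unfold zfun. apply minz_unique.
  - cbn [tri]. lia.
  - intros k Hk. assert (tri (S k) <= tri (a + b)) by (apply tri_mono; lia). lia.
Qed.

Lemma unp1_npair a b : unp1 (npair a b) = a.
Proof. unfold unp1, unp2. rewrite zfun_npair, npair_tri. lia. Qed.
Lemma unp2_npair a b : unp2 (npair a b) = b.
Proof. unfold unp2. rewrite zfun_npair, npair_tri. lia. Qed.

Lemma prim_zfun k f : prim k f -> prim k (fun v => zfun (f v)).
Proof.
  intros Hf. apply (prim_comp1 k (fun v => zfun (nth 0 v 0))); auto.
  unfold zfun.
  apply (prim_mu 1 (fun v => S (nth 1 v 0) - tri (S (nth 0 v 0)))).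
  - apply prim_sub; [apply prim_succ, prim_proj; lia|apply prim_tri, prim_succ, prim_proj; lia].
  - intros v. exists (nth 0 v 0). cbn [nth tri]. pose proof (tri_ge (nth 0 v 0)). lia.
Qed.

Lemma prim_unp2 k f : prim k f -> prim k (fun v => unp2 (f v)).
Proof. intros Hf. unfold unp2. apply prim_sub; auto. apply prim_tri, prim_zfun; auto. Qed.
Lemma prim_unp1 k f : prim k f -> prim k (fun v => unp1 (f v)).
Proof. intros Hf. unfold unp1. apply prim_sub; [apply prim_zfun|apply prim_unp2]; auto. Qed.

Definition lenc (k : nat) : nat := minz (fun L => (k + 2) - 2 ^ (S L)).

Lemma senc_bounds s : 2 ^ length s <= senc s + 1 /\ senc s + 2 <= 2 ^ S (length s).
Proof.
  induction s as [|b t IH]; simpl; [lia|].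
  destruct b; simpl in *; lia.
Qed.

Lemma pow2_ge n : n + 2 <= 2 ^ S n.
Proof. induction n; simpl in *; lia. Qed.

Lemma lenc_senc s : lenc (senc s) = length s.
Proof.
  unfold lenc. destruct (senc_bounds s) as [H1 H2]. apply minz_unique.
  - lia.
  - intros j Hj. assert (2 ^ S j <= 2 ^ length s) by (apply Nat.pow_le_mono_r; lia). lia.
Qed.

Lemma prim_lenc k f : prim k f -> prim k (fun v => lenc (f v)).
Proof.
  intros Hf. apply (prim_comp1 k (fun v => lenc (nth 0 v 0))); auto.
  unfold lenc.
  apply (prim_mu 1 (fun v => (nth 1 v 0 + 2) - 2 ^ S (nth 0 v 0))).
  - apply prim_sub; [apply prim_add; [apply prim_proj; lia|apply prim_const]|].
    apply prim_pow2, prim_succ, prim_proj; lia.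
  - intros v. exists (nth 0 v 0). simpl. pose proof (pow2_ge (nth 0 v 0)). simpl in H. lia.
Qed.

Lemma evenb_double n : evenb (2 * n) = 1 /\ evenb (S (2 * n)) = 0.
Proof.
  induction n; [simpl; auto|]. replace (2 * S n) with (S (S (2 * n))) by lia.
  destruct IHn as [A B]. cbn [evenb]. rewrite A. auto.
Qed.

Definition Adef (rho : nat -> nat) (q : list bool -> nat -> Q) (n : nat) (s : list bool) : bool :=
  (2 ^ n + 3 <=? rho (length s)) &&
  Z.ltb (Z.of_nat ((rho (length s) - 2) * Pos.to_nat (Qden (q s 0)))) (Qnum (q s 0)).

Definition FA (Fq rho : nat -> nat) (m : nat) : nat :=
  (1 - (2 ^ unp1 m + 3 - rho (lenc (unp2 m)))) * evenb (unp1 (Fq (tri (unp2 m)))) *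
  (1 - ((2 * ((rho (lenc (unp2 m)) - 2) * S (unp2 (Fq (tri (unp2 m))))) + 2) - unp1 (Fq (tri (unp2 m))))).

Ltac prim_auto :=
  repeat first
   [ apply prim_unp1 | apply prim_unp2 | apply prim_lenc | apply prim_tri | apply prim_even
   | apply prim_zfun | apply prim_pow2 | apply prim_mul | apply prim_add | apply prim_sub
   | apply prim_succ
   | apply prim_proj; lia | apply prim_const
   | apply prim_of_rec; [eassumption|] ].

Lemma zenc_cases z x : (0 <= x)%Z ->
  (evenb (zenc z) * (1 - ((2 * Z.to_nat x + 2) - zenc z)) = if Z.ltb x z then 1 else 0).
Proof.
  intros Hx. destruct z as [|p|p];
  [change (zenc 0%Z) with 0 | change (zenc (Zpos p)) with (2 * Pos.to_nat p)
   | change (zenc (Zneg p)) with (2 * Pos.to_nat p - 1)].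
  - change (evenb 0) with 1. destruct (Z.ltb_spec x 0); lia.
  - destruct (evenb_double (Pos.to_nat p)) as [A _]. rewrite A.
    destruct (Z.ltb_spec x (Zpos p)); lia.
  - pose proof (Pos2Nat.is_pos p).
    replace (2 * Pos.to_nat p - 1) with (S (2 * (Pos.to_nat p - 1))) by lia.
    destruct (evenb_double (Pos.to_nat p - 1)) as [_ B]. rewrite B.
    destruct (Z.ltb_spec x (Zneg p)); lia.
Qed.

Lemma A_recursive rho q : recursive rho -> recursive_SNQ q -> recursive_set_NS (Adef rho q).
Proof.
  intros Hr [Fq [HFq Hq]]. exists (FA Fq rho). split.
  - apply recursive_of_prim. unfold FA. prim_auto.
  - intros n s. unfold FA. rewrite unp1_npair, unp2_npair, lenc_senc.
    replace (tri (senc s)) with (npair (senc s) 0) by (rewrite npair_tri, !Nat.add_0_r; reflexivity).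
    rewrite Hq. unfold qenc. rewrite unp1_npair, unp2_npair.
    pose proof (Pos2Nat.is_pos (Qden (q s 0))).
    replace (S (Pos.to_nat (Qden (q s 0)) - 1)) with (Pos.to_nat (Qden (q s 0))) by lia.
    rewrite <- Nat.mul_assoc.
    replace ((rho (length s) - 2) * Pos.to_nat (Qden (q s 0))) with
      (Z.to_nat (Z.of_nat ((rho (length s) - 2) * Pos.to_nat (Qden (q s 0))))) by (rewrite Nat2Z.id; reflexivity).
    rewrite zenc_cases; [|apply Nat2Z.is_nonneg].
    unfold Adef. destruct (Nat.leb_spec (2 ^ n + 3) (rho (length s))).
    + replace (1 - (2 ^ n + 3 - rho (length s))) with 1 by lia. simpl.
      destruct Z.ltb; lia.
    + replace (1 - (2 ^ n + 3 - rho (length s))) with 0 by lia. reflexivity.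
Qed.

Definition Edef (rho : nat -> nat) (a b : nat) : nat := minz (fun l => (2 ^ a + 3) - rho l).

Lemma E_recursive rho : growth_function rho -> recursive_NN (Edef rho).
Proof.
  intros [Hr [Hm Hu]].
  exists (fun m => minz (fun l => (2 ^ unp1 m + 3) - rho l)). split.
  - apply recursive_of_prim.
    apply (prim_mu 1 (fun v => (2 ^ unp1 (nth 1 v 0) + 3) - rho (nth 0 v 0))).
    + prim_auto.
    + intros v. destruct (Hu (2 ^ unp1 (nth 0 v 0) + 3)) as [l Hl]. exists l. cbn [nth]. lia.
  - intros a b. unfold Edef. rewrite unp1_npair. reflexivity.
Qed.

Lemma Edef_spec rho a b : growth_function rho -> 2 ^ a + 3 <= rho (Edef rho a b).
Proof.
  intros [Hr [Hm Hu]]. unfold Edef.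
  destruct (minz_spec (fun l => (2 ^ a + 3) - rho l)) as [A _].
  - destruct (Hu (2 ^ a + 3)) as [l Hl]. exists l. lia.
  - lia.
Qed.

Open Scope R_scope.

Lemma firstn_prefix w k n : (k <= n)%nat -> firstn k (prefix w n) = prefix w k.
Proof.
  intros H. unfold prefix. rewrite firstn_map. f_equal.
  replace n with (k + (n - k))%nat by lia. rewrite seq_app, firstn_app.
  rewrite firstn_all2 by (rewrite length_seq; lia).
  rewrite length_seq. replace (k - k)%nat with 0%nat by lia. simpl. apply app_nil_r.
Qed.

Lemma length_prefix w n : length (prefix w n) = n.
Proof. unfold prefix. rewrite length_map, length_seq. reflexivity. Qed.

Definition hit (T : list bool -> R) (c : R) (s : list bool) : Prop :=
  exists j, (j <= length s)%nat /\ c <= T (firstn j s).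

Definition Mst (T : list bool -> R) (c : R) (s : list bool) : R :=
  if excluded_middle_informative (hit T c s) then 1 else T s / c.

Lemma firstn_app_le (s : list bool) x j : (j <= length s)%nat -> firstn j (s ++ x) = firstn j s.
Proof.
  intros H. rewrite firstn_app. replace (j - length s)%nat with 0%nat by lia.
  simpl. apply app_nil_r.
Qed.

Lemma ville phi T c (G : Omega -> Prop) :
  test_supermartingale phi T -> 1 <= c ->
  (forall w, G w -> exists k, c <= T (prefix w k)) ->
  Rbar_le (upper_prob phi G) (Finite (/ c)).
Proof.
  intros [HS [Hpos H1]] Hc HG.
  assert (Hc0 : 0 < c) by lra.
  assert (Hge : forall s, 0 <= Mst T c s).
  { intros s. unfold Mst. destruct excluded_middle_informative; [lra|].
    apply Rmult_le_pos; [apply Hpos|apply Rlt_le, Rinv_0_lt_compat; lra]. }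
  unfold upper_prob. destruct (Glb_Rbar_correct (upper_prob_set phi G)) as [Hlb _].
  apply Hlb. exists (Mst T c). split; [|split].
  - intros s p Hp. pose proof (HS s p Hp) as HT.
    pose proof (ilo_ge0 (phi s)). pose proof (ihi_le1 (phi s)).
    assert (0 <= p <= 1) by lra.
    unfold Mst at 3. destruct excluded_middle_informative as [Hh|Hn].
    + assert (HM : forall x, Mst T c (s ++ [x]) = 1).
      { intros x. unfold Mst. destruct excluded_middle_informative as [|Hn]; auto.
        exfalso; apply Hn. destruct Hh as [j [Hj Hj2]]. exists j. split.
        - rewrite length_app; lia.
        - rewrite firstn_app_le; auto. }
      rewrite !HM. lra.
    + assert (HM : forall x, Mst T c (s ++ [x]) <= T (s ++ [x]) / c).
      { intros x. unfold Mst. destruct excluded_middle_informative as [Hh|]; [|lra].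
        destruct Hh as [j [Hj Hj2]]. rewrite length_app in Hj. simpl in Hj.
        destruct (le_lt_dec j (length s)) as [l|l].
        - exfalso; apply Hn. exists j; split; auto. rewrite <- firstn_app_le with (x := [x]); auto.
        - rewrite firstn_all2 in Hj2 by (rewrite length_app; simpl; lia).
          apply (Rmult_le_reg_r c); [lra|]. unfold Rdiv. rewrite Rmult_assoc, Rinv_l by lra. lra. }
      apply Rle_trans with (p * (T (s ++ [true]) / c) + (1 - p) * (T (s ++ [false]) / c)).
      + apply Rplus_le_compat; apply Rmult_le_compat_l; auto; lra.
      + replace (p * (T (s ++ [true]) / c) + (1 - p) * (T (s ++ [false]) / c)) with
          ((p * T (s ++ [true]) + (1 - p) * T (s ++ [false])) / c) by (field; lra).
        apply Rmult_le_compat_r; [apply Rlt_le, Rinv_0_lt_compat; lra|exact HT].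
  - intros w. split.
    + apply Rbar_le_trans with (LimInf_seq (fun _ => 0)).
      * rewrite LimInf_seq_const; apply Rbar_le_refl.
      * apply LimInf_le. exists 0%nat. intros n _. apply Hge.
    + intros Gw. destruct (HG w Gw) as [k Hk].
      apply Rbar_le_trans with (LimInf_seq (fun _ => 1)).
      * rewrite LimInf_seq_const; apply Rbar_le_refl.
      * apply LimInf_le. exists k. intros n Hn. unfold Mst.
        destruct excluded_middle_informative as [|Hn']; [lra|].
        exfalso; apply Hn'. exists k. split.
        -- rewrite length_prefix; lia.
        -- rewrite firstn_prefix; auto.
  - unfold Mst. destruct excluded_middle_informative as [[j [Hj Hj2]]|Hn].
    + simpl in Hj. replace j with 0%nat in Hj2 by lia. simpl in Hj2.
      assert (c = 1) by lra. subst c. field.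
    + rewrite H1. field. lra.
Qed.

Lemma key_conv (r : nat) (q : Q) : (2 <= r)%nat ->
  ((Z.of_nat ((r - 2) * Pos.to_nat (Qden q))) < Qnum q)%Z <-> INR r - 2 < Q2R q.
Proof.
  intros Hr. set (D := IZR (Zpos (Qden q))).
  assert (HD : 0 < D) by (apply IZR_lt; lia).
  assert (E : IZR (Z.of_nat ((r - 2) * Pos.to_nat (Qden q))) = (INR r - 2) * D).
  { rewrite <- INR_IZR_INZ, mult_INR, minus_INR by lia.
    rewrite INR_IZR_INZ with (n := Pos.to_nat _), positive_nat_Z. simpl. reflexivity. }
  unfold Q2R. fold D. split.
  - intros H. apply IZR_lt in H. rewrite E in H.
    apply (Rmult_lt_reg_r D); [lra|]. rewrite Rmult_assoc, Rinv_l, Rmult_1_r by lra. lra.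
  - intros H. apply lt_IZR. rewrite E.
    apply (Rmult_lt_compat_r D) in H; [|lra].
    rewrite Rmult_assoc, Rinv_l, Rmult_1_r in H by lra. lra.
Qed.

Lemma abs1 x y : Rabs (x - y) <= 1 -> y - 1 <= x <= y + 1.
Proof. unfold Rabs. destruct Rcase_abs; lra. Qed.

Lemma A_sound rho q T n s : (forall s, Rabs (T s - Q2R (q s 0%nat)) <= 1) ->
  Adef rho q n s = true ->
  (2 ^ n + 3 <= rho (length s))%nat /\ INR (rho (length s)) - 3 < T s.
Proof.
  intros HT H. unfold Adef in H. apply andb_prop in H as [H1 H2].
  apply Nat.leb_le in H1. apply Z.ltb_lt in H2. split; auto.
  apply key_conv in H2; [|lia]. pose proof (abs1 _ _ (HT s)). lra.
Qed.

Lemma A_complete rho q T n s : (forall s, Rabs (T s - Q2R (q s 0%nat)) <= 1) ->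
  (2 ^ n + 3 <= rho (length s))%nat -> INR (rho (length s)) < T s ->
  Adef rho q n s = true.
Proof.
  intros HT H1 H2. unfold Adef. apply andb_true_intro. split.
  - apply Nat.leb_le; auto.
  - apply Z.ltb_lt. apply key_conv; [lia|]. pose proof (abs1 _ _ (HT s)). lra.
Qed.

Lemma INR_pow2 n : INR (2 ^ n) = 2 ^ n.
Proof. rewrite pow_INR. simpl. f_equal; lra. Qed.

Theorem proposition8p1 (phi : forecasting_system) (w : Omega) :
  schnorr_test_random phi w -> schnorr_random phi w.
Proof.
  intros Hstr T rho HT [q [Hq Happ]] Hrho.
  destruct (classic (Rbar_le (LimSup_seq (fun n => T (prefix w n) - INR (rho n))) (Finite 0)))
    as [H|Hn]; auto. exfalso.
  assert (HT1 : forall s, Rabs (T s - Q2R (q s 0%nat)) <= 1).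
  { intros s. specialize (Happ s 0%nat). simpl in Happ. lra. }
  assert (Hinf : forall K, exists k, (K <= k)%nat /\ INR (rho k) < T (prefix w k)).
  { intros K. apply NNPP. intros Hno. apply Hn.
    apply Rbar_le_trans with (LimSup_seq (fun _ => 0)).
    - apply LimSup_le. exists K. intros k Hk.
      destruct (Rle_dec (T (prefix w k)) (INR (rho k))); [lra|].
      exfalso; apply Hno; exists k; split; auto; lra.
    - rewrite LimSup_seq_const; apply Rbar_le_refl. }
  pose proof Hrho as [Hrr [Hmono Hunb]].
  apply (Hstr (Adef rho q) (Edef rho)).
  - split; [|split; [|split]].
    + apply A_recursive; auto.
    + apply E_recursive; auto.
    + intros n. apply ville with (T := T); [auto|apply pow_R1_Rle; lra|].
      intros w' [s [Hs Hp]]. exists (length s). rewrite Hp.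
      destruct (A_sound rho q T n s HT1 Hs) as [Ha Hb].
      apply le_INR in Ha. rewrite plus_INR, INR_pow2 in Ha. simpl in Ha. lra.
    + intros N n l Hl. apply ville with (T := T); [auto|apply pow_R1_Rle; lra|].
      intros w' [[s [Hs Hp]] Hnot]. exists (length s). rewrite Hp.
      destruct (le_lt_dec l (length s)) as [Hle|Hlt].
      * destruct (A_sound rho q T n s HT1 Hs) as [_ Hb].
        pose proof (Edef_spec rho N n Hrho) as He.
        assert (rho (Edef rho N n) <= rho (length s))%nat by (apply Hmono; lia).
        assert (Ha : (2 ^ N + 3 <= rho (length s))%nat) by lia.
        apply le_INR in Ha. rewrite plus_INR, INR_pow2 in Ha. simpl in Ha. lra.
      * exfalso; apply Hnot. exists s. split; auto. split; auto.
  - intros n. destruct (Hunb (2 ^ n + 3)%nat) as [K HK].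
    destruct (Hinf K) as [k [Hk Hlt]]. exists (prefix w k). split.
    + unfold sec. apply (A_complete rho q T); auto; rewrite length_prefix; auto.
      pose proof (Hmono K k Hk). lia.
    + rewrite length_prefix; reflexivity.
Qed.
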